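(* Let $d>0$ and let $\triangle ABC$ be a geodesic triangle in hyperbolic space. Suppose that for each vertex $V\in\{A,B,C\}$, the ball of radius $d+\operatorname{arccosh}(2/\sqrt3)$ centered at $V$ is separated by a hyperplane from the other two vertices. Then the Fermat point $F$ of $\triangle ABC$ lies inside the triangle and $|FA|,|FB|,|FC|$ are all greater than $d$.
   Context: The Fermat point of a geodesic triangle $\triangle ABC$ is the point $F$ of the $2$-simplex spanned by the triangle minimizing $|FA|+|FB|+|FC|$. *)

(* Defs.v *)
From Stdlib Require Import Reals.
Open Scope R_scope.

Fixpoint sdot (n : nat) (x y : nat -> R) : R :=
  match n with
  | O => 0
  | S m => sdot m x y + x (S m) * y (S m)
  end.

Definition mdot (n : nat) (x y : nat -> R) : R := - (x 0%nat * y 0%nat) + sdot n x y.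

(* points of hyperbolic n-space H^n = upper sheet of the hyperboloid
   (only coordinates 0..n are meaningful) *)
Definition hyp (n : nat) (x : nat -> R) : Prop := mdot n x x = -1 /\ 0 < x 0%nat.

Definition arccosh (t : R) : R := ln (t + sqrt (t * t - 1)).

Definition hdist (n : nat) (x y : nat -> R) : R := arccosh (- mdot n x y).

(* the 2-simplex spanned by the geodesic triangle ABC: geodesic convex hull,
   i.e. points of H^n that are nonnegative combinations of A, B, C *)
Definition in_simplex (n : nat) (A B C F : nat -> R) : Prop :=
  hyp n F /\ exists a b c : R, 0 <= a /\ 0 <= b /\ 0 <= c /\
    forall i : nat, (i <= n)%nat -> F i = a * A i + b * B i + c * C i.

Definition in_triangle_interior (n : nat) (A B C F : nat -> R) : Prop :=
  hyp n F /\ exists a b c : R, 0 < a /\ 0 < b /\ 0 < c /\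
    forall i : nat, (i <= n)%nat -> F i = a * A i + b * B i + c * C i.

Definition fsum (n : nat) (A B C F : nat -> R) : R :=
  hdist n F A + hdist n F B + hdist n F C.

Definition is_fermat_point (n : nat) (A B C F : nat -> R) : Prop :=
  in_simplex n A B C F /\
  forall G, in_simplex n A B C G -> fsum n A B C F <= fsum n A B C G.

(* A hyperplane of H^n is {x | <x,u> = 0} for a spacelike u (<u,u> > 0). *)
Definition ball_separated (n : nat) (V : nat -> R) (r : R) (W1 W2 : nat -> R) : Prop :=
  exists u : nat -> R, 0 < mdot n u u /\
    (forall x, hyp n x -> hdist n V x <= r -> mdot n x u <= 0) /\
    0 < mdot n W1 u /\ 0 < mdot n W2 u.

(* Main.v *)
Require Import Defs.
From Stdlib Require Import Reals Lra Lia Psatz.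
Open Scope R_scope.

Definition vlin (a : R) (x : nat -> R) (b : R) (y : nat -> R) : nat -> R :=
  fun i => a * x i + b * y i.

Lemma sdot_vlin_l n a x b y z :
  sdot n (vlin a x b y) z = a * sdot n x z + b * sdot n y z.
Proof. induction n; simpl; [ring|]. rewrite IHn; unfold vlin; ring. Qed.

Lemma sdot_sym n x y : sdot n x y = sdot n y x.
Proof. induction n; simpl; [ring|]. rewrite IHn; ring. Qed.

Lemma sdot_vlin_r n a x b y z :
  sdot n z (vlin a x b y) = a * sdot n z x + b * sdot n z y.
Proof. rewrite sdot_sym, sdot_vlin_l, (sdot_sym n x), (sdot_sym n y); ring. Qed.

Lemma mdot_sym n x y : mdot n x y = mdot n y x.
Proof. unfold mdot; rewrite sdot_sym; ring. Qed.

Lemma mdot_vlin_l n a x b y z :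
  mdot n (vlin a x b y) z = a * mdot n x z + b * mdot n y z.
Proof. unfold mdot; rewrite sdot_vlin_l; unfold vlin; ring. Qed.

Lemma mdot_vlin_r n a x b y z :
  mdot n z (vlin a x b y) = a * mdot n z x + b * mdot n z y.
Proof. rewrite mdot_sym, mdot_vlin_l, (mdot_sym n x), (mdot_sym n y); ring. Qed.

Lemma sdot_nonneg n x : 0 <= sdot n x x.
Proof. induction n; simpl; nra. Qed.

Lemma sdot_ext n x y z : (forall i, (i <= n)%nat -> x i = y i) ->
  sdot n x z = sdot n y z.
Proof.
  induction n; intros H; simpl; [ring|].
  rewrite IHn by (intros; apply H; lia). rewrite (H (S n)) by lia. ring.
Qed.

Lemma mdot_ext n x y z : (forall i, (i <= n)%nat -> x i = y i) ->
  mdot n x z = mdot n y z.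
Proof.
  intros H; unfold mdot; rewrite (sdot_ext n x y z H), (H 0%nat) by lia; ring.
Qed.

Lemma quad_cs a b c : 0 <= c -> (forall t, 0 <= a - 2*t*b + t*t*c) -> b*b <= a*c.
Proof.
  intros Hc H.
  destruct (Rle_lt_or_eq_dec 0 c Hc) as [Hc'|Hc'].
  - specialize (H (b/c)).
    assert (E : a - 2 * (b/c) * b + (b/c)*(b/c)*c = (a*c - b*b)/c) by (field; lra).
    rewrite E in H.
    assert (0 <= a*c - b*b); [|lra].
    apply Rmult_le_reg_r with (/c). apply Rinv_0_lt_compat; lra.
    rewrite Rmult_0_l; exact H.
  - subst c. destruct (Req_dec b 0) as [Hb|Hb]. subst; nra.
    specialize (H ((a+1)/(2*b))).
    assert (E : a - 2 * ((a+1)/(2*b)) * b + ((a+1)/(2*b))*((a+1)/(2*b))*0 = -1) by (field; lra).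
    lra.
Qed.

Lemma sdot_cs n x y : sdot n x y * sdot n x y <= sdot n x x * sdot n y y.
Proof.
  apply quad_cs. apply sdot_nonneg.
  intros t. pose proof (sdot_nonneg n (vlin 1 x (-t) y)) as H.
  rewrite sdot_vlin_l, !sdot_vlin_r in H. rewrite (sdot_sym n y x) in H. nra.
Qed.

Lemma hyp_sdot n x : hyp n x -> sdot n x x = x 0%nat * x 0%nat - 1.
Proof. unfold hyp, mdot; intros [H _]; lra. Qed.

Lemma rev_cs n x y : hyp n x -> hyp n y -> 1 <= - mdot n x y.
Proof.
  intros Hx Hy. pose proof (hyp_sdot n x Hx). pose proof (hyp_sdot n y Hy).
  pose proof (sdot_cs n x y). destruct Hx as [_ Hx0]. destruct Hy as [_ Hy0].
  pose proof (sdot_nonneg n x). pose proof (sdot_nonneg n y).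
  unfold mdot. set (S := sdot n x y) in *.
  set (a := x 0%nat) in *. set (b := y 0%nat) in *.
  assert (1 <= a) by nra. assert (1 <= b) by nra.
  assert ((a*b - 1) * (a*b-1) - (a*a-1)*(b*b-1) = (a-b)*(a-b)) by ring.
  match goal with H1 : sdot n x x = _, H2 : sdot n y y = _, H3 : S * S <= _ |- _ =>
    rewrite H1, H2 in H3 end.
  assert (S*S <= (a*b-1)*(a*b-1)) by (pose proof (Rle_0_sqr (a-b)); unfold Rsqr in *; lra).
  assert (1 <= a*b) by (apply Rle_trans with (1*1); [lra| apply Rmult_le_compat; lra]).
  assert (S <= a*b - 1).
  { destruct (Rle_lt_dec S (a*b-1)); auto.
    assert (0 < (S - (a*b-1)) * (S + (a*b-1))) by (apply Rmult_lt_0_compat; lra). nra. }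
  lra.
Qed.

Lemma upper n F x : hyp n F -> mdot n x x = -1 -> mdot n x F < 0 -> 0 < x 0%nat.
Proof.
  intros HF Hx H. pose proof (hyp_sdot n F HF).
  assert (sdot n x x = x 0%nat * x 0%nat - 1) by (unfold mdot in Hx; lra).
  pose proof (sdot_cs n x F). destruct HF as [_ HF0].
  unfold mdot in H. set (S := sdot n x F) in *.
  set (a := x 0%nat) in *. set (b := F 0%nat) in *.
  pose proof (sdot_nonneg n F).
  destruct (Rlt_or_le 0 a) as [|Ha]; [auto|exfalso].
  assert (S < a*b) by lra. assert (a*b <= 0) by nra.
  nra.
Qed.

Lemma tangent_aux n F v : hyp n F -> mdot n v F = 0 ->
  v 0%nat * v 0%nat * (F 0%nat * F 0%nat) <= sdot n v v * (F 0%nat * F 0%nat - 1).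
Proof.
  intros HF H. pose proof (hyp_sdot n F HF) as E. pose proof (sdot_cs n v F) as C.
  rewrite E in C. unfold mdot in H.
  assert (E2 : sdot n v F = v 0%nat * F 0%nat) by lra. rewrite E2 in C. nra.
Qed.

Lemma tangent_nonneg n F v : hyp n F -> mdot n v F = 0 -> 0 <= mdot n v v.
Proof.
  intros HF H. pose proof (tangent_aux n F v HF H) as T.
  destruct HF as [_ HF0]. pose proof (sdot_nonneg n v).
  unfold mdot. set (S := sdot n v v) in *.
  set (a := v 0%nat) in *. set (b := F 0%nat) in *.
  assert (a*a*(b*b) <= S*(b*b)) by nra.
  assert (a*a <= S).
  { apply Rmult_le_reg_r with (b*b). nra. lra. }
  lra.
Qed.

Lemma tangent_zero n F v z : hyp n F -> mdot n v F = 0 -> mdot n v v = 0 -> mdot n v z = 0.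
Proof.
  intros HF H H0. pose proof (tangent_aux n F v HF H) as T.
  destruct HF as [_ HF0]. pose proof (sdot_nonneg n v).
  pose proof (sdot_cs n v z) as C. pose proof (sdot_nonneg n z).
  unfold mdot in *. set (S := sdot n v v) in *.
  set (a := v 0%nat) in *. set (b := F 0%nat) in *.
  assert (ES : S = a*a) by lra. rewrite ES in T.
  assert (a*a <= 0) by nra.
  assert (a = 0) by nra.
  assert (S = 0) by nra. rewrite H5 in C.
  assert (sdot n v z = 0) by nra. rewrite H6, H4. ring.
Qed.

Lemma tangent_cs n F v y : hyp n F -> mdot n v F = 0 -> mdot n y F = 0 ->
  mdot n v y * mdot n v y <= mdot n v v * mdot n y y.
Proof.
  intros HF Hv Hy. rewrite (Rmult_comm (mdot n v v)).
  apply quad_cs. apply (tangent_nonneg n F); auto.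
  intros t. assert (T : mdot n (vlin (-t) v 1 y) F = 0) by (rewrite mdot_vlin_l; nra).
  pose proof (tangent_nonneg n F _ HF T) as H.
  rewrite mdot_vlin_l, !mdot_vlin_r in H. rewrite (mdot_sym n y v) in H. nra.
Qed.

Lemma exp_ge x : 1 + x <= exp x.
Proof.
  destruct (Req_dec x 0) as [->|H]. rewrite exp_0; lra.
  left; apply exp_ineq1; auto.
Qed.

Lemma ln_le' x y : 0 < x -> x <= y -> ln x <= ln y.
Proof.
  intros Hx [H|H]. left; apply ln_increasing; auto. subst; lra.
Qed.

Lemma ln_le_sub1 x : 0 < x -> ln x <= x - 1.
Proof. intros H. pose proof (exp_ge (ln x)). rewrite exp_ln in H0; lra. Qed.

Lemma sq1 t : 1 <= t -> sqrt (t*t-1) * sqrt (t*t-1) = t*t - 1.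
Proof. intros; apply sqrt_sqrt; nra. Qed.

Lemma ach_e_pos t : 1 <= t -> 1 <= t + sqrt (t*t-1).
Proof. intros; pose proof (sqrt_pos (t*t-1)); lra. Qed.

Lemma acosh_mono x y : 1 <= x -> x <= y -> arccosh x <= arccosh y.
Proof.
  intros H1 H2. unfold arccosh. apply ln_le'. pose proof (ach_e_pos x H1); lra.
  assert (sqrt (x*x-1) <= sqrt (y*y-1)) by (apply sqrt_le_1_alt; nra). lra.
Qed.

Lemma acosh_1 : arccosh 1 = 0.
Proof. unfold arccosh. replace (1*1-1) with 0 by ring. rewrite sqrt_0, Rplus_0_r. apply ln_1. Qed.

Lemma acosh_add a b : 1 <= a -> 1 <= b ->
  arccosh (a*b + sqrt (a*a-1) * sqrt (b*b-1)) = arccosh a + arccosh b.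
Proof.
  intros Ha Hb. unfold arccosh.
  pose proof (sq1 a Ha). pose proof (sq1 b Hb).
  pose proof (sqrt_pos (a*a-1)). pose proof (sqrt_pos (b*b-1)).
  set (sa := sqrt (a*a-1)) in *. set (sb := sqrt (b*b-1)) in *.
  rewrite <- ln_mult by lra. f_equal.
  set (y := a*b + sa*sb).
  assert (sqrt (y*y-1) = a*sb + b*sa).
  { apply sqrt_lem_1. assert (1 <= y) by (unfold y; nra). nra. nra.
    unfold y. nra. }
  rewrite H3. unfold y. ring.
Qed.

Lemma acosh_le_lin c : 1 <= c -> arccosh c <= c + sqrt (c*c-1) - 1.
Proof. intros H. unfold arccosh. apply ln_le_sub1. pose proof (ach_e_pos c H); lra. Qed.

Lemma acosh_exp t : 1 <= t -> exists p, 1 <= p /\ arccosh t = ln p /\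
  t = (p + /p)/2 /\ sqrt (t*t-1) = (p - /p)/2.
Proof.
  intros H. exists (t + sqrt (t*t-1)). pose proof (sq1 t H). pose proof (ach_e_pos t H).
  split; auto. split; auto.
  assert (/ (t + sqrt (t*t-1)) = t - sqrt (t*t-1)).
  { field_simplify_eq. nra. lra. }
  rewrite H2. split; field.
Qed.

Lemma acosh_concave x y : 1 < x -> 1 <= y ->
  arccosh y <= arccosh x + (y - x) / sqrt (x*x-1).
Proof.
  intros Hx Hy.
  assert (Hs : 0 < sqrt (x*x-1)) by (apply sqrt_lt_R0; nra).
  destruct (acosh_exp x ltac:(lra)) as [p [Hp [Ep [Xp Sp]]]].
  destruct (acosh_exp y Hy) as [q [Hq [Eq [Yq _]]]].
  rewrite Ep, Eq.
  set (h := ln q - ln p).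
  assert (Eq' : q = p * exp h).
  { unfold h, Rminus. rewrite exp_plus, exp_Ropp, !exp_ln by lra. field. lra. }
  pose proof (exp_ge h) as E1. pose proof (exp_ge (-h)) as E2.
  rewrite exp_Ropp in E2. set (e := exp h) in *.
  assert (He : 0 < e) by (unfold e; apply exp_pos).
  assert (ln q = ln p + h) by (unfold h; ring). rewrite H.
  apply Rplus_le_compat_l.
  apply Rmult_le_reg_r with (sqrt (x*x-1)); auto.
  unfold Rdiv. rewrite Rmult_assoc, Rinv_l, Rmult_1_r by lra.
  rewrite Sp, Xp, Yq, Eq'.
  assert (0 < /p) by (apply Rinv_0_lt_compat; lra).
  assert (0 <= p * (e - 1 - h)) by nra.
  assert (0 <= /p * (/e - 1 + h)) by nra.
  assert (E : (p*e + /(p*e))/2 - (p + /p)/2 - h * ((p - /p)/2) =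
     (p * (e - 1 - h) + /p * (/e - 1 + h))/2) by (field; lra).
  lra.
Qed.

Lemma hyp_mm n X : hyp n X -> mdot n X X = -1.
Proof. intros [H _]; exact H. Qed.

Lemma hyp_geo n F w c s : hyp n F -> mdot n w w = 1 -> mdot n w F = 0 ->
  0 <= c -> c*c = 1 + s*s -> hyp n (vlin c F s w).
Proof.
  intros HF Hw HwF Hc Hcs. pose proof (hyp_mm n F HF) as HFF.
  assert (E : mdot n (vlin c F s w) (vlin c F s w) = -1).
  { rewrite !mdot_vlin_l, !mdot_vlin_r, (mdot_sym n F w), HFF, Hw, HwF. nra. }
  split; auto. apply (upper n F); auto.
  rewrite mdot_vlin_l, HFF, HwF. nra.
Qed.

Lemma tang_bound n F X w : hyp n F -> hyp n X -> mdot n w w = 1 -> mdot n w F = 0 ->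
  - mdot n w X <= sqrt ((- mdot n F X) * (- mdot n F X) - 1).
Proof.
  intros HF HX Hw HwF. set (x := - mdot n F X).
  pose proof (hyp_mm n F HF) as HFF. pose proof (hyp_mm n X HX) as HXX.
  set (P := vlin 1 X (-x) F).
  assert (HPF : mdot n P F = 0).
  { unfold P. rewrite mdot_vlin_l, HFF, (mdot_sym n X F). unfold x; ring. }
  assert (HPP : mdot n P P = x*x - 1).
  { unfold P. rewrite !mdot_vlin_l, !mdot_vlin_r, HFF, HXX, (mdot_sym n X F). unfold x; ring. }
  assert (HwP : mdot n w P = mdot n w X).
  { unfold P. rewrite mdot_vlin_r, HwF. ring. }
  pose proof (tangent_cs n F w P HF HwF HPF) as C. rewrite HPP, HwP, Hw in C.
  destruct (Rle_lt_dec (- mdot n w X) 0) as [H|H].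
  - pose proof (sqrt_pos (x*x-1)); lra.
  - rewrite <- (sqrt_square (- mdot n w X)) by lra. apply sqrt_le_1_alt. nra.
Qed.

Lemma geo_bound n F X w c s : hyp n F -> hyp n X -> mdot n w w = 1 -> mdot n w F = 0 ->
  1 <= c -> 0 <= s -> c*c = 1 + s*s ->
  hdist n (vlin c F s w) X <= hdist n F X + arccosh c.
Proof.
  intros HF HX Hw HwF Hc Hs Hcs. unfold hdist.
  pose proof (tang_bound n F X w HF HX Hw HwF) as T.
  pose proof (rev_cs n F X HF HX) as R1.
  pose proof (rev_cs n _ X (hyp_geo n F w c s HF Hw HwF ltac:(lra) Hcs) HX) as R2.
  set (x := - mdot n F X) in *.
  assert (Es : sqrt (c*c-1) = s) by (rewrite <- (sqrt_square s) by auto; f_equal; lra).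
  rewrite <- acosh_add by auto. rewrite Es.
  apply acosh_mono; auto.
  rewrite mdot_vlin_l.
  assert (s * (- mdot n w X) <= s * sqrt (x*x-1)) by (apply Rmult_le_compat_l; auto).
  unfold x in *. lra.
Qed.

Definition rate_ok n F w X a := a = -1 \/ (1 < - mdot n F X /\
  a = mdot n w X / sqrt ((- mdot n F X) * (- mdot n F X) - 1)).

Lemma cs_facts s : 0 <= s -> 1 <= sqrt (1+s*s) /\ sqrt (1+s*s) * sqrt (1+s*s) = 1 + s*s
  /\ sqrt (1+s*s) - 1 <= s*s/2.
Proof.
  intros Hs. assert (E : sqrt (1+s*s) * sqrt (1+s*s) = 1 + s*s) by (apply sqrt_sqrt; nra).
  pose proof (sqrt_pos (1+s*s)).
  assert (1 <= sqrt (1+s*s)) by nra.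
  repeat split; auto. nra.
Qed.

Lemma rate_bound n F X w a : hyp n F -> hyp n X -> mdot n w w = 1 -> mdot n w F = 0 ->
  rate_ok n F w X a -> exists K, 0 <= K /\ forall s, 0 <= s ->
  hdist n (vlin (sqrt (1+s*s)) F s w) X <= hdist n F X - s*a + (sqrt (1+s*s) - 1) * K.
Proof.
  intros HF HX Hw HwF [Ha|[Hx Ha]].
  - exists 1. split; [lra|]. intros s Hs. destruct (cs_facts s Hs) as [H1 [H2 H3]].
    pose proof (geo_bound n F X w _ s HF HX Hw HwF H1 Hs H2).
    pose proof (acosh_le_lin _ H1).
    assert (sqrt (sqrt (1+s*s) * sqrt (1+s*s) - 1) = s) by
      (rewrite H2; replace (1 + s*s - 1) with (s*s) by ring; apply sqrt_square; auto).
    rewrite H4 in H0. subst a. lra.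
  - set (x := - mdot n F X) in *.
    assert (Hsx : 0 < sqrt (x*x-1)) by (apply sqrt_lt_R0; nra).
    exists (x / sqrt (x*x-1)). split. apply Rlt_le, Rdiv_lt_0_compat; lra.
    intros s Hs. destruct (cs_facts s Hs) as [H1 [H2 H3]].
    pose proof (rev_cs n _ X (hyp_geo n F w (sqrt (1+s*s)) s HF Hw HwF ltac:(lra) H2) HX) as R2.
    unfold hdist. fold x.
    eapply Rle_trans. apply (acosh_concave x); auto.
    rewrite mdot_vlin_l. rewrite mdot_vlin_l in R2. fold x in R2 |- *. rewrite Ha.
    replace (mdot n F X) with (-x) by (unfold x; ring). right. field. lra.
Qed.

Lemma descent n A B C F w aA aB aC s0 :
  is_fermat_point n A B C F -> hyp n A -> hyp n B -> hyp n C ->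
  mdot n w w = 1 -> mdot n w F = 0 -> 0 < s0 ->
  (forall s, 0 < s < s0 -> exists a b c, 0 <= a /\ 0 <= b /\ 0 <= c /\
     forall i, (i <= n)%nat -> vlin (sqrt (1+s*s)) F s w i = a * A i + b * B i + c * C i) ->
  rate_ok n F w A aA -> rate_ok n F w B aB -> rate_ok n F w C aC ->
  0 < aA + aB + aC -> False.
Proof.
  intros [[HF _] Hmin] HA HB HC Hw HwF Hs0 Hsimp RA RB RC HS.
  destruct (rate_bound n F A w aA HF HA Hw HwF RA) as [KA [HKA BA]].
  destruct (rate_bound n F B w aB HF HB Hw HwF RB) as [KB [HKB BB]].
  destruct (rate_bound n F C w aC HF HC Hw HwF RC) as [KC [HKC BC]].
  set (S := aA + aB + aC) in *. set (K := KA + KB + KC).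
  set (s := Rmin (s0/2) (S/(K+1))).
  assert (HK : 0 <= K) by (unfold K; lra).
  assert (Hs1 : s <= s0/2) by apply Rmin_l.
  assert (Hs2 : s <= S/(K+1)) by apply Rmin_r.
  assert (Hsp : 0 < s).
  { unfold s. apply Rmin_glb_lt. lra. apply Rdiv_lt_0_compat; lra. }
  destruct (cs_facts s ltac:(lra)) as [H1 [H2 H3]].
  assert (HsK : s * (K+1) <= S).
  { apply Rmult_le_reg_r with (/(K+1)). apply Rinv_0_lt_compat; lra.
    rewrite Rmult_assoc, Rinv_r by lra. unfold Rdiv in Hs2. lra. }
  destruct (Hsimp s ltac:(lra)) as [a [b [c [Ha [Hb [Hc Hi]]]]]].
  assert (HG : in_simplex n A B C (vlin (sqrt (1+s*s)) F s w)).
  { split. apply hyp_geo; auto; lra. exists a, b, c; auto. }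
  specialize (Hmin _ HG). unfold fsum in Hmin.
  specialize (BA s ltac:(lra)). specialize (BB s ltac:(lra)). specialize (BC s ltac:(lra)).
  set (c1 := sqrt (1+s*s) - 1) in *.
  assert (c1 * K <= s*s/2 * K) by (apply Rmult_le_compat_r; auto).
  assert (s * s * K <= s * S) by nra.
  assert (c1*KA + c1*KB + c1*KC = c1 * K) by (unfold K; ring).
  assert (s*S = s*aA+s*aB+s*aC) by (unfold S; ring). assert (0 < s*S) by nra. lra.
Qed.

Lemma sqrt_pos_sq x : 1 < x -> 0 < sqrt (x*x-1) /\ sqrt (x*x-1) * sqrt (x*x-1) = x*x-1.
Proof. intros; split. apply sqrt_lt_R0; nra. apply sqrt_sqrt; nra. Qed.

Lemma case2 n A B C F b c : is_fermat_point n A B C F -> hyp n A -> hyp n B -> hyp n C ->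
  1 < - mdot n F A -> 1 < - mdot n F B -> 1 < - mdot n F C -> 0 <= b -> 0 <= c ->
  (forall i, (i <= n)%nat -> F i = b * B i + c * C i) -> False.
Proof.
  intros HFm HA HB HC HxA HxB HxC Hb Hc HFi.
  pose proof HFm as [[HF _] _].
  pose proof (hyp_mm n F HF) as HFF. pose proof (hyp_mm n A HA) as HAA.
  pose proof (hyp_mm n B HB) as HBB. pose proof (hyp_mm n C HC) as HCC.
  set (xA := - mdot n F A) in *. set (xB := - mdot n F B) in *. set (xC := - mdot n F C) in *.
  destruct (sqrt_pos_sq xA HxA) as [HsA EsA].
  destruct (sqrt_pos_sq xB HxB) as [HsB EsB].
  destruct (sqrt_pos_sq xC HxC) as [HsC EsC].
  set (sA := sqrt (xA*xA-1)) in *. set (sB := sqrt (xB*xB-1)) in *. set (sC := sqrt (xC*xC-1)) in *.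
  set (w := vlin (/sA) A (-xA/sA) F).
  assert (EAF : mdot n A F = - xA) by (unfold xA; rewrite mdot_sym; ring).
  assert (Hw0 : mdot n w F = 0).
  { unfold w. rewrite mdot_vlin_l, EAF, HFF. field. lra. }
  assert (Hw1 : mdot n w w = 1).
  { unfold w. rewrite !mdot_vlin_l, !mdot_vlin_r, EAF, HFF, HAA, (mdot_sym n F A).
    fold xA. replace (- - xA) with xA by ring. field_simplify_eq; [|lra]. nra. }
  assert (HwA : mdot n w A = sA).
  { unfold w. rewrite mdot_vlin_l, HAA. replace (mdot n F A) with (-xA) by (unfold xA; ring).
    field_simplify_eq; [|lra]. nra. }
  assert (Ext : forall z, mdot n F z = b * mdot n B z + c * mdot n C z).
  { intros z. rewrite (mdot_ext n F (vlin b B c C) z) by (intros; unfold vlin; auto).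
    apply mdot_vlin_l. }
  assert (Rel : b * mdot n w B + c * mdot n w C = 0).
  { rewrite (mdot_sym n w B), (mdot_sym n w C), <- Ext, mdot_sym; exact Hw0. }
  set (k := - mdot n B C).
  assert (ExB : xB = b + c*k).
  { unfold xB. rewrite Ext, HBB, (mdot_sym n C B). unfold k; ring. }
  assert (ExC : xC = b*k + c).
  { unfold xC. rewrite Ext, HCC. unfold k; ring. }
  assert (E1 : 1 = b*xB + c*xC).
  { pose proof (Ext F) as E. rewrite HFF, (mdot_sym n B F), (mdot_sym n C F) in E.
    unfold xB, xC. lra. }
  assert (D1 : b*xB - c*xC = b*b - c*c) by (rewrite ExB, ExC; ring).
  assert (Sq : (b*sB)*(b*sB) = (c*sC)*(c*sC)).
  { replace ((b*sB)*(b*sB)) with (b*b*(sB*sB)) by ring.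
    replace ((c*sC)*(c*sC)) with (c*c*(sC*sC)) by ring.
    rewrite EsB, EsC.
    assert (b*b*(xB*xB) - c*c*(xC*xC) = (b*xB - c*xC)*(b*xB + c*xC)) by ring.
    nra. }
  assert (EqM : b*sB = c*sC).
  { assert (0 <= b*sB) by nra. assert (0 <= c*sC) by nra.
    assert ((b*sB - c*sC)*(b*sB + c*sC) = 0) by nra.
    destruct (Rmult_integral _ _ H1); nra. }
  assert (Hbp : 0 < b).
  { destruct Hb as [|Hb0]; auto. subst b. exfalso.
    assert (c*sC = 0) by nra. assert (c = 0) by nra. subst c. lra. }
  assert (Hcp : 0 < c).
  { destruct Hc as [|Hc0]; auto. subst c. exfalso.
    assert (b*sB = 0) by nra. assert (b = 0) by nra. lra. }
  apply (descent n A B C F w 1 (mdot n w B / sB) (mdot n w C / sC) (sA / xA) HFm HA HB HC Hw1 Hw0).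
  - apply Rdiv_lt_0_compat; lra.
  - intros s [Hs1 Hs2]. destruct (cs_facts s ltac:(lra)) as [H1 [H2 H3]].
    set (c0 := sqrt (1+s*s)) in *.
    assert (Hsx : s * xA < sA).
    { apply Rmult_lt_reg_r with (/xA). apply Rinv_0_lt_compat; lra.
      rewrite Rmult_assoc, Rinv_r by lra. unfold Rdiv in Hs2. lra. }
    assert (Hk0 : 0 <= c0 - s*xA/sA).
    { assert (s*xA/sA < 1). { apply Rmult_lt_reg_r with sA; auto. unfold Rdiv.
        rewrite Rmult_assoc, Rinv_l by lra. lra. } lra. }
    exists (s/sA), ((c0 - s*xA/sA)*b), ((c0 - s*xA/sA)*c).
    split. apply Rlt_le, Rdiv_lt_0_compat; lra.
    split. nra. split. nra.
    intros i Hi. unfold vlin, w, vlin. rewrite (HFi i Hi). field. lra.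
  - right. split; auto. change (1 = mdot n w A / sA). rewrite HwA. field. lra.
  - right. split; auto.
  - right. split; auto.
  - assert (mdot n w B / sB + mdot n w C / sC = 0).
    { assert (/sB = b / (b*sB)) by (field; lra).
      assert (/sC = c / (c*sC)) by (field; lra).
      unfold Rdiv. rewrite H, H0, EqM.
      replace (mdot n w B * (b / (c * sC)) + mdot n w C * (c / (c * sC)))
        with ((b * mdot n w B + c * mdot n w C) / (c*sC)) by (field; nra).
      rewrite Rel. unfold Rdiv; ring. }
    lra.
Qed.

Lemma not_eq_pt n F X u : hyp n F -> hyp n X -> - mdot n F X <= 1 ->
  mdot n X u = mdot n F u.
Proof.
  intros HF HX H. pose proof (rev_cs n F X HF HX).
  pose proof (hyp_mm n F HF) as HFF. pose proof (hyp_mm n X HX) as HXX.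
  set (v := vlin 1 X (-1) F).
  assert (Hv0 : mdot n v F = 0).
  { unfold v. rewrite mdot_vlin_l, HFF, (mdot_sym n X F). lra. }
  assert (Hv1 : mdot n v v = 0).
  { unfold v. rewrite !mdot_vlin_l, !mdot_vlin_r, HFF, HXX, (mdot_sym n X F). lra. }
  pose proof (tangent_zero n F v u HF Hv0 Hv1) as Z.
  unfold v in Z. rewrite mdot_vlin_l in Z. lra.
Qed.

Lemma case1 n A B C F d : is_fermat_point n A B C F -> hyp n A -> hyp n B -> hyp n C ->
  ball_separated n A (d + arccosh (2 / sqrt 3)) B C -> hdist n F A <= d -> False.
Proof.
  intros HFm HA HB HC [u [Hq [Hball [HBu HCu]]]] HFA.
  pose proof HFm as [[HF [a [b [c [Ha [Hb [Hc HFi]]]]]]] _].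
  pose proof (hyp_mm n F HF) as HFF. pose proof (hyp_mm n A HA) as HAA.
  pose proof (hyp_mm n B HB) as HBB. pose proof (hyp_mm n C HC) as HCC.
  set (q := mdot n u u) in *. set (phi := - mdot n F u).
  set (uT := vlin 1 u (-phi) F).
  assert (HuF : mdot n u F = - phi) by (unfold phi; rewrite mdot_sym; ring).
  assert (HuT0 : mdot n uT F = 0).
  { unfold uT. rewrite mdot_vlin_l, HFF, HuF. ring. }
  assert (HuT1 : mdot n uT uT = q + phi*phi).
  { unfold uT. rewrite !mdot_vlin_l, !mdot_vlin_r, HFF, HuF, (mdot_sym n F u), HuF. fold q. ring. }
  assert (HuTu : mdot n uT u = q + phi*phi).
  { unfold uT. rewrite mdot_vlin_l, (mdot_sym n F u), HuF. fold q. ring. }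
  assert (Hm2 : 0 < q + phi*phi) by nra.
  set (m := sqrt (q + phi*phi)).
  assert (Hm : 0 < m) by (apply sqrt_lt_R0; lra).
  assert (Emm : m * m = q + phi*phi) by (apply sqrt_sqrt; lra).
  set (nh := vlin (/m) uT 0 uT).
  assert (Hnh0 : mdot n nh F = 0) by (unfold nh; rewrite mdot_vlin_l, HuT0; ring).
  assert (Hnh1 : mdot n nh nh = 1).
  { unfold nh. rewrite !mdot_vlin_l, !mdot_vlin_r, HuT1, <- Emm. field. lra. }
  assert (Hnhu : mdot n nh u = m).
  { unfold nh. rewrite mdot_vlin_l, HuTu, <- Emm. field. lra. }
  assert (H3 : 0 < sqrt 3) by (apply sqrt_lt_R0; lra).
  assert (E3 : sqrt 3 * sqrt 3 = 3) by (apply sqrt_sqrt; lra).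
  set (c3 := 2 / sqrt 3). set (s3 := 1 / sqrt 3).
  assert (Hc3 : 1 <= c3).
  { unfold c3. apply Rmult_le_reg_r with (sqrt 3); auto. unfold Rdiv.
    rewrite Rmult_assoc, Rinv_l by lra. nra. }
  assert (Hs3 : 0 <= s3) by (unfold s3; apply Rlt_le, Rdiv_lt_0_compat; lra).
  assert (Hcs3 : c3*c3 = 1 + s3*s3) by (unfold c3, s3; field_simplify_eq; lra).
  set (pt := vlin c3 F s3 nh).
  assert (Hpt : hyp n pt) by (apply hyp_geo; auto; lra).
  assert (Hdpt : hdist n A pt <= d + arccosh c3).
  { pose proof (geo_bound n F A nh c3 s3 HF HA Hnh1 Hnh0 Hc3 Hs3 Hcs3).
    unfold hdist in *. rewrite mdot_sym. fold pt in H. lra. }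
  specialize (Hball pt Hpt Hdpt).
  assert (Hmphi : m <= 2 * phi).
  { unfold pt in Hball. rewrite mdot_vlin_l, Hnhu in Hball.
    replace (mdot n F u) with (-phi) in Hball by (unfold phi; ring).
    unfold c3, s3 in Hball.
    apply Rmult_le_reg_r with (/ sqrt 3). apply Rinv_0_lt_compat; lra.
    unfold Rdiv in Hball. lra. }
  assert (Hphi : 0 < phi) by lra.
  set (xB := - mdot n F B). set (xC := - mdot n F C).
  assert (HxB : 1 < xB).
  { destruct (Rlt_or_le 1 xB) as [|H]; auto. exfalso.
    pose proof (not_eq_pt n F B u HF HB H). unfold phi in Hphi. lra. }
  assert (HxC : 1 < xC).
  { destruct (Rlt_or_le 1 xC) as [|H]; auto. exfalso.
    pose proof (not_eq_pt n F C u HF HC H). unfold phi in Hphi. lra. }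
  destruct (sqrt_pos_sq xB HxB) as [HsB EsB].
  destruct (sqrt_pos_sq xC HxC) as [HsC EsC].
  set (sB := sqrt (xB*xB-1)) in *. set (sC := sqrt (xC*xC-1)) in *.
  assert (EBF : mdot n B F = - xB) by (unfold xB; rewrite mdot_sym; ring).
  assert (ECF : mdot n C F = - xC) by (unfold xC; rewrite mdot_sym; ring).
  set (PB := vlin 1 B (-xB) F). set (PC := vlin 1 C (-xC) F).
  set (W := vlin (/sB) PB (/sC) PC).
  assert (HW0 : mdot n W F = 0).
  { unfold W, PB, PC. rewrite !mdot_vlin_l, EBF, ECF, HFF. ring. }
  assert (HWu : mdot n W uT = (mdot n B u + phi*xB)/sB + (mdot n C u + phi*xC)/sC).
  { unfold W, PB, PC, uT. rewrite !mdot_vlin_l, !mdot_vlin_r, EBF, ECF, HFF.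
    replace (mdot n F u) with (-phi) by (unfold phi; ring). field. lra. }
  assert (HxsB : sB < xB) by nra. assert (HxsC : sC < xC) by nra.
  assert (LB : phi < (mdot n B u + phi*xB)/sB).
  { apply Rmult_lt_reg_r with sB; auto. unfold Rdiv. rewrite Rmult_assoc, Rinv_l by lra. nra. }
  assert (LC : phi < (mdot n C u + phi*xC)/sC).
  { apply Rmult_lt_reg_r with sC; auto. unfold Rdiv. rewrite Rmult_assoc, Rinv_l by lra. nra. }
  pose proof (tangent_cs n F W uT HF HW0 HuT0) as CS. rewrite HuT1, HWu in CS.
  set (WW := mdot n W W) in *.
  assert (HWW : 1 < WW).
  { assert (m < (mdot n B u + phi * xB) / sB + (mdot n C u + phi * xC) / sC) by lra.
    set (t := (mdot n B u + phi * xB) / sB + (mdot n C u + phi * xC) / sC) in *.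
    assert (m*m < t*t) by nra.
    rewrite Emm in H0. nra. }
  set (N := sqrt WW).
  assert (HN : 1 < N).
  { unfold N. rewrite <- sqrt_1. apply sqrt_lt_1_alt; lra. }
  assert (ENN : N * N = WW) by (apply sqrt_sqrt; lra).
  set (w := vlin (/N) W 0 W).
  assert (Hw0 : mdot n w F = 0) by (unfold w; rewrite mdot_vlin_l, HW0; ring).
  assert (Hw1 : mdot n w w = 1).
  { unfold w. rewrite !mdot_vlin_l, !mdot_vlin_r. fold WW. rewrite <- ENN. field. lra. }
  assert (EWW : WW = mdot n W B / sB + mdot n W C / sC).
  { unfold WW. unfold W at 2. rewrite mdot_vlin_r. unfold PB, PC. rewrite !mdot_vlin_r.
    rewrite (mdot_sym n W F), HW0 at 1. rewrite (mdot_sym n F W), HW0. field. lra. }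
  apply (descent n A B C F w (-1) (mdot n w B / sB) (mdot n w C / sC)
           (N / (xB/sB + xC/sC)) HFm HA HB HC Hw1 Hw0).
  - apply Rdiv_lt_0_compat. lra.
    assert (0 < xB/sB) by (apply Rdiv_lt_0_compat; lra).
    assert (0 < xC/sC) by (apply Rdiv_lt_0_compat; lra). lra.
  - intros s [Hs1 Hs2]. destruct (cs_facts s ltac:(lra)) as [H1 [H2 H4]].
    set (c0 := sqrt (1+s*s)) in *.
    set (L := xB/sB + xC/sC) in *.
    assert (HL : 0 < L).
    { assert (0 < xB/sB) by (apply Rdiv_lt_0_compat; lra).
      assert (0 < xC/sC) by (apply Rdiv_lt_0_compat; lra). unfold L; lra. }
    assert (Hk : s / N * L < 1).
    { apply Rmult_lt_reg_r with (N / L). apply Rdiv_lt_0_compat; lra.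
      replace (s / N * L * (N / L)) with s by (field; lra). lra. }
    set (k0 := c0 - s / N * L).
    assert (Hk0 : 0 <= k0) by (unfold k0; lra).
    exists (k0*a), (k0*b + s/(N*sB)), (k0*c + s/(N*sC)).
    assert (0 < s/(N*sB)) by (apply Rdiv_lt_0_compat; nra).
    assert (0 < s/(N*sC)) by (apply Rdiv_lt_0_compat; nra).
    split. nra. split. nra. split. nra.
    intros i Hi. unfold vlin, w, W, PB, PC, vlin. unfold k0, L.
    rewrite (HFi i Hi). field. lra.
  - left; reflexivity.
  - right. split. exact HxB. reflexivity.
  - right. split. exact HxC. reflexivity.
  - assert (mdot n w B / sB + mdot n w C / sC = N).
    { unfold w. rewrite !mdot_vlin_l.
      replace N with (WW / N) at 3 by (rewrite <- ENN; field; lra).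
      rewrite EWW. field. lra. }
    lra.
Qed.

Lemma fermat_perm n A B C A' B' C' F :
  (forall G, in_simplex n A' B' C' G -> in_simplex n A B C G) ->
  (forall G, in_simplex n A B C G -> in_simplex n A' B' C' G) ->
  (forall G, fsum n A B C G = fsum n A' B' C' G) ->
  is_fermat_point n A B C F -> is_fermat_point n A' B' C' F.
Proof.
  intros H1 H2 H3 [HF Hm]. split; auto. intros G HG. rewrite <- !H3. auto.
Qed.

Lemma fermat_BAC n A B C F : is_fermat_point n A B C F -> is_fermat_point n B A C F.
Proof.
  apply fermat_perm.
  - intros G [H [a [b [c [Ha [Hb [Hc Hi]]]]]]]. split; auto. exists b, a, c.
    repeat split; auto. intros i Hi'. rewrite Hi by auto. ring.
  - intros G [H [a [b [c [Ha [Hb [Hc Hi]]]]]]]. split; auto. exists b, a, c.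
    repeat split; auto. intros i Hi'. rewrite Hi by auto. ring.
  - intros G. unfold fsum. ring.
Qed.

Lemma fermat_CAB n A B C F : is_fermat_point n A B C F -> is_fermat_point n C A B F.
Proof.
  apply fermat_perm.
  - intros G [H [a [b [c [Ha [Hb [Hc Hi]]]]]]]. split; auto. exists b, c, a.
    repeat split; auto. intros i Hi'. rewrite Hi by auto. ring.
  - intros G [H [a [b [c [Ha [Hb [Hc Hi]]]]]]]. split; auto. exists c, a, b.
    repeat split; auto. intros i Hi'. rewrite Hi by auto. ring.
  - intros G. unfold fsum. ring.
Qed.

Lemma far n F X d : 0 < d -> hyp n F -> hyp n X -> d < hdist n F X -> 1 < - mdot n F X.
Proof.
  intros Hd HF HX H. pose proof (rev_cs n F X HF HX).
  destruct (Rlt_or_le 1 (- mdot n F X)) as [|H1]; auto. exfalso.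
  unfold hdist in H. replace (- mdot n F X) with 1 in H by lra. rewrite acosh_1 in H. lra.
Qed.

Theorem mainTheorem12 (n : nat) (hn : (2 <= n)%nat) (d : R) (hd : 0 < d)
  (A B C : nat -> R) (hA : hyp n A) (hB : hyp n B) (hC : hyp n C)
  (sepA : ball_separated n A (d + arccosh (2 / sqrt 3)) B C)
  (sepB : ball_separated n B (d + arccosh (2 / sqrt 3)) A C)
  (sepC : ball_separated n C (d + arccosh (2 / sqrt 3)) A B)
  (F : nat -> R) (hF : is_fermat_point n A B C F) :
  in_triangle_interior n A B C F /\
  d < hdist n F A /\ d < hdist n F B /\ d < hdist n F C.
Proof.
  assert (dA : d < hdist n F A).
  { destruct (Rlt_or_le d (hdist n F A)) as [|H]; auto. exfalso.
    exact (case1 n A B C F d hF hA hB hC sepA H). }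
  assert (dB : d < hdist n F B).
  { destruct (Rlt_or_le d (hdist n F B)) as [|H]; auto. exfalso.
    exact (case1 n B A C F d (fermat_BAC _ _ _ _ _ hF) hB hA hC sepB H). }
  assert (dC : d < hdist n F C).
  { destruct (Rlt_or_le d (hdist n F C)) as [|H]; auto. exfalso.
    exact (case1 n C A B F d (fermat_CAB _ _ _ _ _ hF) hC hA hB sepC H). }
  pose proof hF as [[HF [a [b [c [Ha [Hb [Hc Hi]]]]]]] _].
  pose proof (far n F A d hd HF hA dA) as xA.
  pose proof (far n F B d hd HF hB dB) as xB.
  pose proof (far n F C d hd HF hC dC) as xC.
  split; [|auto].
  split; auto. exists a, b, c.
  destruct Ha as [Ha|Ha]; [|exfalso; subst a;
    apply (case2 n A B C F b c hF hA hB hC xA xB xC Hb Hc);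
    intros i Hi'; rewrite Hi by auto; ring].
  destruct Hb as [Hb|Hb]; [|exfalso; subst b;
    apply (case2 n B A C F a c (fermat_BAC _ _ _ _ _ hF) hB hA hC xB xA xC ltac:(lra) Hc);
    intros i Hi'; rewrite Hi by auto; ring].
  destruct Hc as [Hc|Hc]; [|exfalso; subst c;
    apply (case2 n C A B F a b (fermat_CAB _ _ _ _ _ hF) hC hA hB xC xA xB ltac:(lra) ltac:(lra));
    intros i Hi'; rewrite Hi by auto; ring].
  auto.
Qed.
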